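(* Let $G$ be a compact Hausdorff topological group acting continuously by isometries on a proper, purely $1$-unrectifiable metric space $\mathcal{M}$. Then $\mathcal{M}/G$ is purely $1$-unrectifiable.
   Context: $\mathcal{M}/G=\{\overline{Gx}:x\in\mathcal{M}\}$ with the metric $d_{\mathcal{M}/G}(\overline{Gx},\overline{Gy})=\inf\{d(x',y'):x'\in\overline{Gx},y'\in\overline{Gy}\}$ (the Hausdorff distance). A metric space is proper if closed balls are compact; it is purely $1$-unrectifiable if for every $A\subset\mathbb{R}$ and every Lipschitz $f:A\to\mathcal{M}$ the $1$-dimensional Hausdorff measure of $f(A)$ is $0$. *)

(* Defs.v *)
From HB Require Import structures.
From mathcomp Require Import all_boot all_order all_algebra.
From mathcomp Require Import all_classical all_reals all_analysis.
Set Implicit Arguments. Unset Strict Implicit. Unset Printing Implicit Defensive.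
Import Order.TTheory GRing.Theory Num.Theory.
Local Open Scope classical_set_scope.
Local Open Scope ring_scope.

Section Defs.
Variable R : realType.

Section Dist.
Variables (X : Type) (dX : X -> X -> R).

(* diameter (in \bar R); the diameter of the empty set is 0 *)
Definition diam (F : set X) : \bar R :=
  ereal_sup ([set 0%E] `|` [set (dX x y)%:E | x in F & y in F]).

Definition hausdorff1_delta (E : set X) (delta : R) : \bar R :=
  ereal_inf [set (\sum_(0 <= i <oo) diam (F i))%E
            | F in [set F : nat -> set X |
                     E `<=` \bigcup_i F i /\ (forall i, (diam (F i) <= delta%:E)%E)]].

(* 1-dimensional Hausdorff measure: H^1(E) = lim_{delta -> 0+} H^1_delta(E)
   (= sup over delta > 0, since H^1_delta is nonincreasing in delta) *)
Definition hausdorff1 (E : set X) : \bar R :=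
  ereal_sup [set hausdorff1_delta E delta | delta in [set d : R | 0 < d]].

Definition lipschitz_on (A : set R) (f : R -> X) : Prop :=
  exists L : R, forall x y, A x -> A y -> dX (f x) (f y) <= L * `|x - y|.

Definition purely_1_unrectifiable : Prop :=
  forall (A : set R) (f : R -> X), lipschitz_on A f -> hausdorff1 (f @` A) = 0%E.
End Dist.

Definition proper_metric (M : metricType R) : Prop :=
  forall (x : M) (r : R), compact [set y : M | mdist x y <= r].

Definition is_topological_group (G : topologicalType)
  (mul : G -> G -> G) (inv : G -> G) (one : G) : Prop :=
  [/\ (forall a b c, mul a (mul b c) = mul (mul a b) c),
      (forall a, mul one a = a /\ mul a one = a),
      (forall a, mul (inv a) a = one /\ mul a (inv a) = one),
      continuous (fun p : G * G => mul p.1 p.2) &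
      continuous inv].

Definition is_continuous_isometric_action (G : topologicalType)
  (mul : G -> G -> G) (one : G) (M : metricType R) (act : G -> M -> M) : Prop :=
  [/\ (forall x, act one x = x),
      (forall g h x, act (mul g h) x = act g (act h x)),
      (forall g x y, mdist (act g x) (act g y) = mdist x y) &
      continuous (fun p : G * M => act p.1 p.2)].

Definition orbit_closure (G : topologicalType) (M : metricType R)
  (act : G -> M -> M) (x : M) : set M :=
  closure [set act g x | g in [set: G]].

Definition orbit_space (G : topologicalType) (M : metricType R)
  (act : G -> M -> M) : Type :=
  {S : set M | exists x : M, S = orbit_closure act x}.

Definition orbit_dist (G : topologicalType) (M : metricType R)
  (act : G -> M -> M) (S T : orbit_space act) : R :=
  inf [set mdist x y | x in proj1_sig S & y in proj1_sig T].

End Defs.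

(* Main.v *)
Require Import Defs.
From HB Require Import structures.
From mathcomp Require Import all_boot all_order all_algebra.
From mathcomp Require Import all_classical all_reals all_analysis.
From mathcomp Require Import ring lra.
Import Order.TTheory GRing.Theory Num.Theory.
Import numFieldNormedType.Exports.
Local Open Scope classical_set_scope.
Local Open Scope ring_scope.
Set Implicit Arguments. Unset Strict Implicit. Unset Printing Implicit Defensive.

Lemma mdist_cont (R : realType) (M : metricType R) (x : M) :
  continuous (fun y : M => mdist x y).
Proof.
move=> y; apply/cvgrPdist_lt => e e0.
near=> z.
have yz : mdist y z < e.
  near: z. have := @nbhsx_ballx R M y e e0. rewrite ballEmdist. by [].
have h1 := metric_triangle x y z.
have h2 := metric_triangle x z y.
rewrite (metric_sym z y) in h2.
rewrite ltr_norml; apply/andP; split; lra.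
Unshelve. all: by end_near.
Qed.

Lemma act_cont_x (R : realType) (G : topologicalType) (mul : G -> G -> G)
  {one : G} {M : metricType R} {act : G -> M -> M} (x : M) :
  is_continuous_isometric_action mul one act ->
  continuous (fun g => act g x).
Proof.
case=> _ _ _ hc g.
apply: (@continuous_comp _ _ _ (fun g => (g, x)) (fun p : G * M => act p.1 p.2) g); last exact: hc.
apply: cvg_pair; [exact: cvg_id | exact: cvg_cst].
Qed.

Lemma orbitE {R : realType} {G : topologicalType} {mul : G -> G -> G}
  {one : G} {M : metricType R} {act : G -> M -> M} (x : M) :
  compact [set: G] -> is_continuous_isometric_action mul one act ->
  orbit_closure act x = [set act g x | g in [set: G]].
Proof.
move=> Gc Ha; rewrite /orbit_closure; apply/esym/closure_id.
apply: compact_closed; first exact: metric_hausdorff.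
apply: continuous_compact => //; apply: continuous_subspaceT; exact: act_cont_x Ha.
Qed.

Lemma orbit_mem (R : realType) (G : topologicalType) (mul : G -> G -> G)
  {one : G} {M : metricType R} {act : G -> M -> M} (x : M) :
  is_continuous_isometric_action mul one act ->
  orbit_closure act x x.
Proof.
case=> h1 _ _ _; apply: subset_closure; exists one => //.
Qed.

Lemma orbit_compact (R : realType) (G : topologicalType) (mul : G -> G -> G)
  (one : G) (M : metricType R) (act : G -> M -> M) (S : orbit_space act) :
  compact [set: G] -> is_continuous_isometric_action mul one act ->
  compact (proj1_sig S).
Proof.
move=> Gc Ha; case: S => /= S [x ->]; rewrite (orbitE x Gc Ha).
apply: continuous_compact => //; apply: continuous_subspaceT; exact: act_cont_x Ha.
Qed.

Lemma orbit_act (R : realType) (G : topologicalType) (mul : G -> G -> G)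
  (one : G) (M : metricType R) (act : G -> M -> M) (S : orbit_space act) g y :
  compact [set: G] -> is_continuous_isometric_action mul one act ->
  proj1_sig S y -> proj1_sig S (act g y).
Proof.
move=> Gc Ha; case: S => /= S [x ->]; rewrite (orbitE x Gc Ha).
case=> b _ <-; exists (mul g b) => //; by case: Ha => _ -> _ _.
Qed.

Lemma orbit_trans (R : realType) (G : topologicalType) (mul : G -> G -> G)
  (inv : G -> G) (one : G) (M : metricType R) (act : G -> M -> M)
  (S : orbit_space act) y z :
  is_topological_group mul inv one ->
  compact [set: G] -> is_continuous_isometric_action mul one act ->
  proj1_sig S y -> proj1_sig S z -> exists g, z = act g y.
Proof.
move=> Hg Gc Ha; case: S => /= S [x ->]; rewrite (orbitE x Gc Ha).
case=> a _ <- [b _ <-]; exists (mul b (inv a)).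
case: Ha => h1 hm _ _; case: Hg => _ _ hinv _ _.
by rewrite !hm -(hm (inv a)) (proj1 (hinv a)) h1.
Qed.

Lemma orbit_nonempty (R : realType) (G : topologicalType) (mul : G -> G -> G)
  (one : G) (M : metricType R) (act : G -> M -> M) (S : orbit_space act) :
  is_continuous_isometric_action mul one act ->
  exists y, proj1_sig S y.
Proof.
move=> Ha; case: S => /= S [x ->]; exists x; exact: orbit_mem Ha.
Qed.

Lemma odist_lb (R : realType) (G : topologicalType) (M : metricType R)
  (act : G -> M -> M) (S T : orbit_space act) :
  lbound [set mdist x y | x in proj1_sig S & y in proj1_sig T] 0.
Proof. by move=> _ [x _ [y _ <-]]; exact: mdist_ge0. Qed.

Lemma odist_le (R : realType) (G : topologicalType) (M : metricType R)
  (act : G -> M -> M) (S T : orbit_space act) x y :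
  proj1_sig S x -> proj1_sig T y -> orbit_dist S T <= mdist x y.
Proof.
move=> Sx Ty; apply: ge_inf; first by exists 0; exact: odist_lb.
by exists x => //; exists y.
Qed.

Lemma odist_ge0 (R : realType) (G : topologicalType) (mul : G -> G -> G)
  (one : G) (M : metricType R) (act : G -> M -> M) (S T : orbit_space act) :
  is_continuous_isometric_action mul one act ->
  0 <= orbit_dist S T.
Proof.
move=> Ha; apply: lb_le_inf; last exact: odist_lb.
have [x Sx] := orbit_nonempty S Ha; have [y Ty] := orbit_nonempty T Ha.
by exists (mdist x y); exists x => //; exists y.
Qed.

Lemma submetry (R : realType) (G : topologicalType) (mul : G -> G -> G)
  (inv : G -> G) (one : G) (M : metricType R) (act : G -> M -> M)
  (S T : orbit_space act) x :
  is_topological_group mul inv one ->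
  compact [set: G] -> is_continuous_isometric_action mul one act ->
  proj1_sig S x -> exists2 y, proj1_sig T y & mdist x y <= orbit_dist S T.
Proof.
move=> Hg Gc Ha Sx.
have hc : {within proj1_sig T, continuous (fun y => mdist x y)}.
  by apply: continuous_subspaceT; exact: mdist_cont.
have [c Tc cmin] := compact_EVT_min (orbit_nonempty T Ha) (orbit_compact (S:=T) Gc Ha) hc.
exists c; first by rewrite inE in Tc.
apply: lb_le_inf.
  have [y Ty] := orbit_nonempty T Ha.
  by exists (mdist x y); exists x => //; exists y.
move=> _ [x' Sx' [y' Ty' <-]].
have [g xe] := orbit_trans Hg Gc Ha Sx' Sx.
have -> : mdist x' y' = mdist x (act g y') by rewrite xe; case: Ha => _ _ -> _.
apply: cmin; rewrite inE; exact: (orbit_act _ Gc Ha Ty').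
Qed.

Lemma finite_lift (R : realType) (G : topologicalType) (mul : G -> G -> G)
  (inv : G -> G) (one : G) (M : metricType R) (act : G -> M -> M)
  (A : set R) (f : R -> orbit_space act) (L : R) :
  is_topological_group mul inv one ->
  compact [set: G] -> is_continuous_isometric_action mul one act ->
  (forall a b, A a -> A b -> orbit_dist (f a) (f b) <= L * `|a - b|) ->
  forall s : seq R, sorted <%R s -> (forall a, a \in s -> A a) ->
  exists h : R -> M, (forall a, proj1_sig (f a) (h a)) /\
    (forall a b, a \in s -> b \in s -> a <= b -> mdist (h a) (h b) <= L * (b - a)).
Proof.
move=> Hg Gc Ha Lf; elim => [_ _|c s IH].
  have [h0 h0P] := boolp.choice (fun a => orbit_nonempty (f a) Ha).
  by exists h0; split.
move=> /= ps sA.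
have [h [hP hL]] := IH (path_sorted ps) (fun a sa => sA a (ltac:(by rewrite inE sa orbT))).
have cs : all (fun x => c < x) s := order_path_min lt_trans ps.
case: s IH ps sA hL cs => [|m s] IH ps sA hL cs.
  exists h; split => // a b; rewrite !inE => /eqP -> /eqP ->.
  by rewrite mdistxx subrr mulr0.
have [y fcy ymin] := submetry (S:=f m) (f c) Hg Gc Ha (hP m).
exists (fun a => if a == c then y else h a); split.
  by move=> a; case: eqP => [->|].
have Ac := sA c (mem_head _ _); have Am := sA m (ltac:(by rewrite !inE eqxx orbT)).
have cm : c < m by move: cs => /= /andP[].
have Lcm := Lf m c Am Ac.
have L0 : 0 <= L.
  have := odist_ge0 (f m) (f c) Ha.
  move=> h0; have := le_trans h0 Lcm.
  by rewrite pmulr_lge0 // normr_gt0 subr_eq0 gt_eqF.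
move=> a b; rewrite inE => /predU1P[->|as_]; rewrite inE => /predU1P[->|bs_] ab.
- by rewrite eqxx mdistxx subrr mulr0.
- rewrite eqxx.
  have bc : b != c by apply/eqP => bc; move: cs => /allP /(_ b bs_); rewrite bc ltxx.
  rewrite (negbTE bc).
  have mb : m <= b.
    move: bs_; rewrite inE => /predU1P[->//|bs'].
    by move: ps => /= /andP[_ /(order_path_min lt_trans) /allP /(_ b bs') /ltW].
  have h1 := hL m b (mem_head _ _) bs_ mb.
  have h2 := metric_triangle y (h m) (h b).
  rewrite metric_sym in ymin.
  rewrite ger0_norm ?subr_ge0 ?(ltW cm) // in Lcm.
  have h3 := le_trans ymin Lcm.
  have -> : L * (b - c) = L * (m - c) + L * (b - m) by ring.
  by apply: (le_trans h2); apply: lerD.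
- exfalso; move: cs => /allP /(_ a as_) ca.
  by move: ab; rewrite leNgt ca.
- have ac : a != c by apply/eqP => ac; move: cs => /allP /(_ a as_); rewrite ac ltxx.
  have bc : b != c by apply/eqP => bc; move: cs => /allP /(_ b bs_); rewrite bc ltxx.
  rewrite (negbTE ac) (negbTE bc); exact: hL.
Qed.

Import ArrowAsProduct.

Lemma global_lift (R : realType) (G : topologicalType) (mul : G -> G -> G)
  (inv : G -> G) (one : G) (M : metricType R) (act : G -> M -> M)
  (A : set R) (f : R -> orbit_space act) (L : R) :
  is_topological_group mul inv one ->
  compact [set: G] -> is_continuous_isometric_action mul one act ->
  (forall a b, A a -> A b -> orbit_dist (f a) (f b) <= L * `|a - b|) ->
  exists h : R -> M, (forall a, proj1_sig (f a) (h a)) /\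
    (forall a b, A a -> A b -> a <= b -> mdist (h a) (h b) <= L * (b - a)).
Proof.
move=> Hg Gc Ha Lf.
pose P := [set h : forall i : R, (fun=> M) i | forall a, proj1_sig (f a) (h a)].
have Pc : compact P by exact: (tychonoff (fun a => orbit_compact (S:=f a) Gc Ha)).
pose C (p : R * R) := [set h : forall i : R, (fun=> M) i |
   A p.1 -> A p.2 -> p.1 <= p.2 -> mdist (h p.1) (h p.2) <= L * (p.2 - p.1)].
pose F (p : R * R) := P `&` C p.
have FI : finI setT F.
  move=> D' _.
  pose s := sort <=%R (undup [seq x <- flatten [seq [:: i.1; i.2] | i <- finmap.enum_fset D'] | `[< A x >]]).
  have ss : sorted <%R s by rewrite sort_lt_sorted undup_uniq.
  have sA : forall a, a \in s -> A a.
    by move=> a; rewrite mem_sort mem_undup mem_filter => /andP[/asboolP].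
  have [h [hP hL]] := finite_lift Hg Gc Ha Lf ss sA.
  exists h => -[a b] /= abD; split => // Aa Ab ab; apply: hL => //.
    rewrite mem_sort mem_undup mem_filter; apply/andP; split; first exact/asboolP.
    apply/flattenP; exists [:: a; b]; first by apply/mapP; exists (a, b).
    by rewrite inE eqxx.
  rewrite mem_sort mem_undup mem_filter; apply/andP; split; first exact/asboolP.
  apply/flattenP; exists [:: a; b]; first by apply/mapP; exists (a, b).
  by rewrite !inE eqxx orbT.
have Fin p : filter_from (finI_from setT F) id (F p).
  by exists (F p) => //; exact: finI_from1.
have FP : filter_from (finI_from setT F) id P.
  by exists (F (0, 0)); [exact: finI_from1 | move=> h []].
have [p [Pp clp]] := Pc _ (finI_filter FI) FP.
exists p; split => // a b Aa Ab ab.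
rewrite leNgt; apply/negP => lt.
pose e := (mdist (p a) (p b) - L * (b - a)) / 2.
have e0 : 0 < e by rewrite /e; lra.
have na : nbhs p (proj a @^-1` ball (p a) e) := @proj_continuous R (fun=> M) a p _ (@nbhsx_ballx R M (p a) e e0).
have nb : nbhs p (proj b @^-1` ball (p b) e) := @proj_continuous R (fun=> M) b p _ (@nbhsx_ballx R M (p b) e e0).
have [k [[_ Ck] [ka kb]]] := clp _ _ (Fin (a, b)) (filterI na nb).
move: ka kb; rewrite /proj /= !ballEmdist /= => ka kb.
have := Ck Aa Ab ab; rewrite /= => hk.
have h1 := metric_triangle (p a) (k a) (p b).
have h2 := metric_triangle (k a) (k b) (p b).
rewrite (metric_sym (k b)) in h2.
rewrite /e in ka kb; lra.
Qed.
Lemma diam_ge0 (R : realType) (X : Type) (dX : X -> X -> R) (F : set X) :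
  (0 <= diam dX F)%E.
Proof. by apply: ereal_sup_ubound; left. Qed.

Lemma diam_le (R : realType) (X Y : Type) (dX : X -> X -> R) (dY : Y -> Y -> R)
  (F : set X) (F' : set Y) :
  (forall u v, F' u -> F' v -> exists x y, [/\ F x, F y & dY u v <= dX x y]) ->
  (diam dY F' <= diam dX F)%E.
Proof.
move=> H; apply: ge_ereal_sup => z [->|[u Fu [v Fv <-]]]; first exact: diam_ge0.
have [x [y [Fx Fy le]]] := H u v Fu Fv.
apply: (@le_trans _ _ (dX x y)%:E); first by rewrite lee_fin.
by apply: ereal_sup_ubound; right; exists x => //; exists y.
Qed.

Lemma hdelta_le (R : realType) (X Y : Type) (dX : X -> X -> R) (dY : Y -> Y -> R)
  (EX : set X) (EY : set Y) (delta : R) :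
  (forall F : nat -> set X, EX `<=` \bigcup_i F i ->
     exists F' : nat -> set Y, EY `<=` \bigcup_i F' i /\
       forall i, (diam dY (F' i) <= diam dX (F i))%E) ->
  (hausdorff1_delta dY EY delta <= hausdorff1_delta dX EX delta)%E.
Proof.
move=> H; apply/ereal_infP => z [F [cov dF] <-].
have [F' [cov' dF']] := H F cov.
apply: (@le_trans _ _ (\sum_(0 <= i <oo) diam dY (F' i))%E).
  apply: ereal_inf_lbound; exists F' => //; split => // i.
  exact: le_trans (dF' i) (dF i).
apply: lee_nneseries => // i _ _; exact: diam_ge0.
Qed.

Lemma hdelta_ge0 (R : realType) (X : Type) (dX : X -> X -> R) (E : set X) d :
  (0 <= hausdorff1_delta dX E d)%E.
Proof.
apply/ereal_infP => z [F _ <-]; apply: nneseries_ge0 => i _ _; exact: diam_ge0.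
Qed.

Lemma h1_zero (R : realType) (X Y : Type) (dX : X -> X -> R) (dY : Y -> Y -> R)
  (EX : set X) (EY : set Y) :
  (forall delta, 0 < delta ->
    (hausdorff1_delta dY EY delta <= hausdorff1_delta dX EX delta)%E) ->
  hausdorff1 dX EX = 0%E -> hausdorff1 dY EY = 0%E.
Proof.
move=> H H0; apply: le_anti; apply/andP; split.
  apply: ge_ereal_sup => z [d d0 <-].
  rewrite -H0; apply: le_trans (H d d0) _.
  by apply: ereal_sup_ubound; exists d.
apply: (@le_trans _ _ (hausdorff1_delta dY EY 1)); first exact: hdelta_ge0.
by apply: ereal_sup_ubound; exists 1 => //=; exact: ltr01.
Qed.

Theorem corollary4p11 (R : realType) (G : topologicalType)
  (mul : G -> G -> G) (inv : G -> G) (one : G) (M : metricType R)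
  (act : G -> M -> M) :
  is_topological_group mul inv one ->
  hausdorff_space G ->
  compact [set: G] ->
  is_continuous_isometric_action mul one act ->
  proper_metric M ->
  purely_1_unrectifiable (@mdist R M) ->
  purely_1_unrectifiable (@orbit_dist R G M act).
Proof.
move=> Hg _ Gc Ha _ Hpu A f [L Lf].
have Lf' : forall a b, A a -> A b -> orbit_dist (f a) (f b) <= `|L| * `|a - b|.
  move=> a b Aa Ab; apply: le_trans (Lf a b Aa Ab) _.
  by apply: ler_wpM2r; [exact: normr_ge0 | exact: ler_norm].
have [h [hP hL]] := global_lift Hg Gc Ha Lf'.
have hLip : Defs.lipschitz_on (@mdist R M) A h.
  exists `|L| => a b Aa Ab; have [ab|ba] := leP a b.
    by rewrite [`|a - b|]distrC [`|b - a|]ger0_norm ?subr_ge0 //; exact: hL.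
  rewrite metric_sym [`|a - b|]ger0_norm ?subr_ge0 ?(ltW ba) //; apply: hL => //; exact: ltW.
apply: (h1_zero (dX := @mdist R M) (EX := h @` A)); last exact: Hpu hLip.
move=> d _; apply: hdelta_le => F cov.
exists (fun i => [set S : orbit_space act | exists2 x, F i x & proj1_sig S x]).
split.
  move=> _ [a Aa <-]; have [i _ Fi] := cov (h a) (ltac:(by exists a)).
  by exists i => //; exists (h a).
move=> i; apply: diam_le => u v [x Fx ux] [y Fy vy].
by exists x, y; split => //; exact: odist_le.
Qed.
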